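(* Let $r\ge 1$ be an integer. For integers $n,k\ge 0$ let $C(n,k,r)$ be the number of compositions of $n$ into $k$ positive parts that have no run of length $\ge r$ (with $C(0,0,r)=1$ counting the empty composition). Then, as formal power series in $x,q$, \[\sum_{n,k\ge 0}C(n,k,r)\,x^nq^k=\frac{1}{1-\frac{xq}{1-x}+q^r\sum_{j\ge 1}\frac{x^{rj}(1-qx^j)}{1-q^rx^{rj}}}.\]
   Context: A composition of $n$ into $k$ parts is an ordered sequence $(a_1,\dots,a_k)$ of positive integers with $a_1+\dots+a_k=n$. A run in a composition is a maximal string of consecutive identical parts; its length is the number of parts in it. For example, $28=3+5+5+5+3+3+4$ has run lengths $1,3,2,1$. *)

(* Defs.v *)
From mathcomp Require Import all_boot all_order all_algebra.
Set Implicit Arguments. Unset Strict Implicit. Unset Printing Implicit Defensive.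
Import Order.TTheory GRing.Theory Num.Theory.

Fixpoint rl_aux (a c : nat) (s : seq nat) : seq nat :=
  match s with
  | [::] => [:: c]
  | b :: s' => if b == a then rl_aux a c.+1 s' else c :: rl_aux b 1 s'
  end.

Definition runlens (s : seq nat) : seq nat :=
  if s is a :: s' then rl_aux a 1 s' else [::].

Definition is_composition (n k : nat) (s : seq nat) : bool :=
  [&& size s == k, all (fun a => 0 < a) s & sumn s == n].

Definition no_long_run (r : nat) (s : seq nat) : bool :=
  all (fun l => l < r) (runlens s).

(* C(n,k,r): every part of a composition of n is <= n, so compositions of n
   into k parts are exactly the sequences [seq val i | i <- t] for
   t : k.-tuple 'I_n.+1 satisfying is_composition (injective encoding). *)
Definition Ccount (n k r : nat) : nat :=
  #|[set t : k.-tuple 'I_n.+1 |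
      is_composition n k (map val t) && no_long_run r (map val t)]|.

Local Open Scope ring_scope.

(* f n k = coefficient of x^n q^k *)
Definition fps := nat -> nat -> int.

Definition fps_const (c : int) : fps := fun n k => if (n == 0)%N && (k == 0)%N then c else 0.
Definition fps_x : fps := fun n k => if (n == 1)%N && (k == 0)%N then 1 else 0.
Definition fps_q : fps := fun n k => if (n == 0)%N && (k == 1)%N then 1 else 0.
Definition fps_add (f g : fps) : fps := fun n k => f n k + g n k.
Definition fps_sub (f g : fps) : fps := fun n k => f n k - g n k.
Definition fps_mul (f g : fps) : fps := fun n k =>
  \sum_(i < n.+1) \sum_(j < k.+1) f i j * g (n - i)%N (k - j)%N.
Fixpoint fps_pow (f : fps) (m : nat) : fps :=
  if m is m'.+1 then fps_mul f (fps_pow f m') else fps_const 1.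

(* 1/(1-b) = sum_{i>=0} b^i, for b with zero constant term: then b^i has no
   monomial of total degree < i, so the coefficient of x^n q^k only receives
   contributions from i <= n+k and the truncated sum is the exact one. *)
Definition fps_geom (b : fps) : fps := fun n k =>
  \sum_(i < (n + k).+1) fps_pow b i n k.

(* 1/a for a with constant term 1:  1/a = 1/(1-(1-a)) *)
Definition fps_inv (a : fps) : fps := fps_geom (fps_sub (fps_const 1) a).

(* sum_{j>=1} f j, for a family in which f j has no monomial of total degree
   < j (true for the family used below, which has the factor x^{rj}, r >= 1):
   the truncated sum is then the exact (locally finite) sum. *)
Definition fps_sum1 (f : nat -> fps) : fps := fun n k =>
  \sum_(1 <= j < (n + k).+1) f j n k.

Definition lhs_series (r : nat) : fps := fun n k => (Ccount n k r)%:Z.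

Definition denom_series (r : nat) : fps :=
  fps_add
    (fps_sub (fps_const 1) (fps_mul (fps_mul fps_x fps_q) (fps_geom fps_x)))
    (fps_mul (fps_pow fps_q r)
       (fps_sum1 (fun j =>
          fps_mul (fps_mul (fps_pow fps_x (r * j))
                           (fps_sub (fps_const 1) (fps_mul fps_q (fps_pow fps_x j))))
                  (fps_geom (fps_mul (fps_pow fps_q r) (fps_pow fps_x (r * j))))))).

Definition rhs_series (r : nat) : fps := fps_inv (denom_series r).

(* Main.v *)
Require Import Defs.
From mathcomp Require Import all_boot all_order all_algebra.
From mathcomp Require Import zify ring.
From Stdlib Require Import FunctionalExtensionality.
Set Implicit Arguments. Unset Strict Implicit. Unset Printing Implicit Defensive.
Import Order.TTheory GRing.Theory Num.Theory.
Local Open Scope ring_scope.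

Ltac dec := repeat match goal with |- context [if ?b then _ else _] => case: (boolP b) end.

Definition mono (a b : nat) : fps := fun n k => if (n == a) && (k == b) then 1 else 0.

Lemma fps_ext (f g : fps) : (forall n k, f n k = g n k) -> f = g.
Proof. move=> H; apply: functional_extensionality => n; apply: functional_extensionality => k; exact: H. Qed.

Lemma sum_pulse (N a : nat) (F : nat -> int) :
  \sum_(i < N) (if (i:nat) == a then F i else 0) = if (a < N)%N then F a else 0.
Proof. by rewrite -big_mkcond big_ord1_eq. Qed.

Lemma sum_widen (A N : nat) (F : nat -> int) : (A <= N)%N ->
  \sum_(i < A) F i = \sum_(i < N) (if (i < A)%N then F i else 0).
Proof. by move=> h; rewrite (big_ord_widen N F h) big_mkcond. Qed.

Lemma sum_eq_guard (A B : nat) (F G : nat -> int) :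
  (forall i, (if (i < A)%N then F i else 0) = (if (i < B)%N then G i else 0)) ->
  \sum_(i < A) F i = \sum_(i < B) G i.
Proof.
move=> H; rewrite (@sum_widen A (A + B) F (leq_addr B A)) (@sum_widen B (A + B) G (leq_addl A B)).
by apply: eq_bigr => i _; apply: H.
Qed.

Lemma sum_trunc (A B : nat) (F : nat -> int) :
  (forall i, (B <= i)%N -> (i < A)%N -> F i = 0) -> (forall i, (A <= i)%N -> (i < B)%N -> F i = 0) ->
  \sum_(i < A) F i = \sum_(i < B) F i.
Proof.
move=> H1 H2; apply: sum_eq_guard => i.
case: (ltnP i A) => hA; case: (ltnP i B) => hB //.
  by rewrite H1.
by rewrite H2.
Qed.

Lemma mul_monoL a b (f : fps) n k : fps_mul (mono a b) f n k =
  if (a <= n)%N && (b <= k)%N then f (n - a)%N (k - b)%N else 0.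
Proof.
rewrite /fps_mul /mono.
transitivity (\sum_(i < n.+1) (if (i:nat) == a then \sum_(j < k.+1) (if (j:nat)==b then f (n-i)%N (k-j)%N else 0) else 0)).
  apply: eq_bigr => i _; case: eqP => _ /=; last by rewrite big1 // => j _; rewrite mul0r.
  by apply: eq_bigr => j _; case: eqP => _; rewrite ?mul1r ?mul0r.
rewrite (sum_pulse _ _ (fun i => \sum_(j < k.+1) (if (j:nat)==b then f (n-i)%N (k-j)%N else 0))).
rewrite (sum_pulse _ _ (fun j => f (n-a)%N (k-j)%N)) !ltnS; by case: (a <= n)%N; case: (b <= k)%N.
Qed.

Lemma mono_mul a b c d : fps_mul (mono a b) (mono c d) = mono (a + c) (b + d).
Proof.
apply: fps_ext => n k; rewrite mul_monoL /mono; dec => //; lia.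
Qed.

Lemma pow_vanish (b : fps) (hb : b 0%N 0%N = 0) i n k : (n + k < i)%N -> fps_pow b i n k = 0.
Proof.
elim: i n k => [|i IH] n k //= h.
rewrite /fps_mul big1 // => i' _; rewrite big1 // => j' _.
case: (boolP ((i' == 0%N :> nat) && (j' == 0%N :> nat))) => [/andP[/eqP -> /eqP ->]|hij].
  by rewrite hb mul0r.
rewrite IH ?mulr0 //.
have := ltn_ord i'; have := ltn_ord j'; move: hij; lia.
Qed.

Lemma geom_eq (b : fps) (hb : b 0%N 0%N = 0) n k :
  fps_geom b n k = fps_const 1 n k + fps_mul b (fps_geom b) n k.
Proof.
rewrite /fps_geom big_ord_recl /=; congr (_ + _).
rewrite /fps_mul.
under eq_bigr => i _ do rewrite /fps_mul.
rewrite exchange_big /=; apply: eq_bigr => i' _.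
rewrite exchange_big /=; apply: eq_bigr => j' _.
rewrite -mulr_sumr.
case: (boolP ((i' == 0%N :> nat) && (j' == 0%N :> nat))) => [/andP[/eqP -> /eqP ->]|hij].
  by rewrite hb !mul0r.
congr (_ * _); apply: (sum_trunc (F := fun i => fps_pow b i (n - i')%N (k - j')%N)) => i h1 h2.
  apply: pow_vanish => //.
  have := ltn_ord i'; have := ltn_ord j'; move: hij h1; lia.
Qed.

Lemma uniq_sol (b f g : fps) (hb : b 0%N 0%N = 0) :
  (forall n k, f n k = fps_const 1 n k + fps_mul b f n k) ->
  (forall n k, g n k = fps_const 1 n k + fps_mul b g n k) ->
  forall n k, f n k = g n k.
Proof.
move=> Hf Hg.
suff H : forall s n k, (n + k < s)%N -> f n k = g n k by move=> n k; apply: (H (n + k).+1).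
elim=> [//|s IH] n k h.
rewrite Hf Hg; congr (_ + _); apply: eq_bigr => i' _; apply: eq_bigr => j' _.
case: (boolP ((i' == 0%N :> nat) && (j' == 0%N :> nat))) => [/andP[/eqP -> /eqP ->]|hij].
  by rewrite hb !mul0r.
congr (_ * _); apply: IH.
have := ltn_ord i'; have := ltn_ord j'; move: hij h; lia.
Qed.

Lemma pow_mono a b m : fps_pow (mono a b) m = mono (a * m) (b * m).
Proof.
elim: m => [|m IH] /=; first by rewrite !muln0; apply: fps_ext.
by rewrite IH mono_mul !mulnS.
Qed.

Lemma pow_x m : fps_pow fps_x m = mono m 0.
Proof. by rewrite (pow_mono 1 0) mul1n mul0n. Qed.

Lemma pow_q m : fps_pow fps_q m = mono 0 m.
Proof. by rewrite (pow_mono 0 1) mul1n mul0n. Qed.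

Lemma geom_mono a b n k :
  fps_geom (mono a b) n k = \sum_(m < (n + k).+1) mono (a * m) (b * m) n k.
Proof. by apply: eq_bigr => m _; rewrite pow_mono. Qed.

Lemma mul_subl (f g h : fps) n k :
  fps_mul (fps_sub f g) h n k = fps_mul f h n k - fps_mul g h n k.
Proof.
rewrite /fps_mul -sumrB; apply: eq_bigr => i _; rewrite -sumrB; apply: eq_bigr => j _.
by rewrite /fps_sub mulrBl.
Qed.

Definition Xs : fps := fps_mul (fps_mul fps_x fps_q) (fps_geom fps_x).

Lemma Xs_val i j : Xs i j = if (1 <= i)%N && (j == 1)%N then 1 else 0.
Proof.
rewrite /Xs (_ : fps_mul fps_x fps_q = mono 1 1); last by rewrite (mono_mul 1 0 0 1).
rewrite mul_monoL (_ : fps_x = mono 1 0) // geom_mono.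
case: (boolP ((1 <= i)%N && (1 <= j)%N)) => h.
  rewrite (eq_bigr (fun m : 'I_ _ => if (m : nat) == (i - 1)%N then (if (j - 1 == 0)%N then 1 else 0) else 0)).
    rewrite (sum_pulse _ _ (fun _ => if (j - 1 == 0)%N then 1 else 0)); move: h; dec => //; lia.
  move=> m _; rewrite /mono; move: h; dec => //; lia.
move: h; dec => //; lia.
Qed.

Definition Fterm (r J : nat) : fps :=
  fps_mul (fps_mul (fps_pow fps_x (r * J))
                   (fps_sub (fps_const 1) (fps_mul fps_q (fps_pow fps_x J))))
          (fps_geom (fps_mul (fps_pow fps_q r) (fps_pow fps_x (r * J)))).

Lemma Fterm_val r J i j M : (1 <= r)%N -> (1 <= J)%N -> (i + j < M)%N ->
  Fterm r J i j = \sum_(m < M) ((if (i == r * J * m.+1)%N && (j == r * m)%N then 1 else 0)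
                    - (if (i == r * J * m.+1 + J)%N && (j == (r * m).+1)%N then 1 else 0)).
Proof.
move=> hr hJ hM.
rewrite /Fterm (_ : fps_mul (fps_pow fps_x (r * J)) _ = fps_sub (mono (r * J) 0) (mono (r * J + J) 1)); last first.
  apply: fps_ext => n k; rewrite pow_x mul_monoL pow_x (_ : fps_q = mono 0 1) // mono_mul.
  rewrite /fps_sub /fps_const /mono; dec => //; lia.
rewrite pow_x pow_q mono_mul add0n addn0 mul_subl !mul_monoL !geom_mono sumrB !subn0.
congr (_ - _).
  case: (boolP ((r * J <= i)%N && (0 <= j)%N)) => h.
    apply: (@sum_eq_guard _ _ (fun m => mono (r * J * m) (r * m) (i - r * J)%N j)
      (fun m => if (i == r * J * m.+1)%N && (j == r * m)%N then 1 else 0)) => m; rewrite /mono; move: h; dec => //; nia.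
  by rewrite big1 // => m _; move: h; dec => //; nia.
case: (boolP ((r * J + J <= i)%N && (1 <= j)%N)) => h.
  apply: (@sum_eq_guard _ _ (fun m => mono (r * J * m) (r * m) (i - (r * J + J))%N (j - 1)%N)
      (fun m => if (i == r * J * m.+1 + J)%N && (j == (r * m).+1)%N then 1 else 0)) => m; rewrite /mono; move: h; dec => //; nia.
by rewrite big1 // => m _; move: h; dec => //; nia.
Qed.

Definition ind (b : bool) : int := if b then 1 else 0.

Definition Ys (r : nat) : fps := fps_mul (fps_pow fps_q r) (fps_sum1 (fun J => Fterm r J)).

Definition Yt (r J m i j : nat) : int :=
  ind ((i == r * J.+1 * m.+1)%N && (j == r * m.+1)%N)
  - ind ((i == r * J.+1 * m.+1 + J.+1)%N && (j == (r * m.+1).+1)%N).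

Lemma Ys_val r i j M : (1 <= r)%N -> (i + j < M)%N ->
  Ys r i j = \sum_(J < M) \sum_(m < M) Yt r J m i j.
Proof.
move=> hr hM; rewrite /Ys pow_q mul_monoL /=.
case: (boolP (r <= j)%N) => h; last first.
  rewrite big1 // => J _; rewrite big1 // => m _; rewrite /Yt /ind; move: h; dec => //; nia.
rewrite subn0 /fps_sum1 big_add1 /= big_mkord.
transitivity (\sum_(J < i + (j - r)) \sum_(m < M)
   (ind ((i == r * J.+1 * m.+1)%N && ((j - r)%N == r * m)%N)
                    - ind ((i == r * J.+1 * m.+1 + J.+1)%N && ((j - r)%N == (r * m).+1)%N))).
  apply: eq_bigr => J _; apply: Fterm_val => //; lia.
rewrite (@sum_trunc (i + (j - r)) M (fun J => \sum_(m < M)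
   (ind ((i == r * J.+1 * m.+1)%N && ((j - r)%N == r * m)%N)
                    - ind ((i == r * J.+1 * m.+1 + J.+1)%N && ((j - r)%N == (r * m).+1)%N)))).
- apply: eq_bigr => J _; apply: eq_bigr => m _; rewrite /Yt /ind; move: h; dec => //; nia.
- move=> J h1 h2; rewrite big1 // => m _; rewrite /ind; dec => //; nia.
- move=> J h1 h2; rewrite big1 // => m _; rewrite /ind; dec => //; nia.
Qed.

Fixpoint comps (n k : nat) : seq (seq nat) :=
  if k is k'.+1 then [seq a :: s | a <- iota 1 n, s <- comps (n - a) k']
  else (if n == 0%N then [:: [::]] else [::]).

Lemma allpairs_cons_uniq (l : seq nat) (T : nat -> seq (seq nat)) :
  uniq l -> (forall a, uniq (T a)) -> uniq [seq a :: s | a <- l, s <- T a].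
Proof.
elim: l => [//|a l IH]; rewrite cons_uniq => /andP[al ul] uT.
have injc : injective (fun s : seq nat => a :: s) by move=> x y [].
rewrite allpairs_cons cat_uniq IH // andbT (map_inj_uniq injc) uT /=.
apply/hasP => -[z /allpairsPdep [b [s [bl _ ->]]] /mapP [s' _ [eab _]]].
by move: al; rewrite -eab bl.
Qed.

Lemma uniq_comps n k : uniq (comps n k).
Proof.
elim: k n => [|k IH] n /=; first by case: (n == 0%N).
by apply: allpairs_cons_uniq; [apply: iota_uniq | move=> a; apply: IH].
Qed.

Lemma mem_comps n k s : (s \in comps n k) = is_composition n k s.
Proof.
elim: k n s => [|k IH] n s /=.
  rewrite /is_composition; case: s => [|b s] /=.
    by rewrite [0%N == n]eq_sym; case: (n == 0%N).
  by case: (n == 0%N).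
apply/allpairsPdep/idP.
  move=> [b [s' [hb hs' ->]]]; move: hs'; rewrite IH /is_composition /= mem_iota in hb *.
  case/and3P => /eqP -> -> /eqP ->; rewrite eqxx /=; apply/andP; split; first lia.
  apply/eqP; lia.
case: s => [|b s]; rewrite /is_composition //= => /and3P[/eqP sk /andP[b0 ps] /eqP sn].
exists b, s; split => //; first by rewrite mem_iota; lia.
have sk2 : size s = k by case: sk.
by rewrite IH /is_composition sk2 ps eqxx /=; apply/eqP; lia.
Qed.

Lemma mem_le_sumn (s : seq nat) x : x \in s -> (x <= sumn s)%N.
Proof.
elim: s => [//|y s IH]; rewrite inE /= => /orP[/eqP ->|h]; first exact: leq_addr.
by apply: leq_trans (IH h) _; apply: leq_addl.
Qed.

Lemma bridge n k r : Ccount n k r = count (no_long_run r) (comps n k).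
Proof.
rewrite /Ccount cardsE cardE /enum_mem size_filter -enumT.
pose g := (fun t : k.-tuple 'I_n.+1 => [seq val i | i <- t]).
transitivity (count (fun s => is_composition n k s && no_long_run r s) (map g (enum {: k.-tuple 'I_n.+1}))).
  by rewrite count_map; apply: eq_count.
rewrite -(eq_count (a1 := predI (no_long_run r) (is_composition n k))); last by move=> s /=; rewrite andbC.
rewrite -count_filter; apply/permP: (no_long_run r); apply: uniq_perm.
- apply: filter_uniq; rewrite map_inj_uniq ?enum_uniq //.
  by move=> t1 t2 /(inj_map val_inj) /val_inj.
- exact: uniq_comps.
move=> s; rewrite mem_filter mem_comps; case: (boolP (is_composition n k s)) => //= hs.
case/and3P: (hs) => /eqP sk _ /eqP sn.
have hsz : size [seq inord x : 'I_n.+1 | x <- s] == k by rewrite size_map sk.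
apply/mapP; exists (Tuple hsz); first by rewrite mem_enum.
rewrite /g /= -map_comp map_id_in // => x xs /=; rewrite inordK // ltnS -sn.
exact: mem_le_sumn.
Qed.

Definition good (r a c : nat) (s : seq nat) := all (fun l => l < r)%N (rl_aux a c s).
Definition Cc (r n k : nat) : nat := count (no_long_run r) (comps n k).
Definition Gc (r a c m k : nat) : nat := count (good r a c) (comps m k).

Lemma good_cons r a c b s : good r a c (b :: s) =
  if b == a then good r a c.+1 s else (c < r)%N && good r b 1 s.
Proof. by rewrite /good /=; case: eqP. Qed.

Lemma count_allpairs_cons (p : pred (seq nat)) (l : seq nat) (T : nat -> seq (seq nat)) :
  count p [seq a :: s | a <- l, s <- T a] = sumn [seq count (fun s => p (a :: s)) (T a) | a <- l].
Proof. by elim: l => [//|a l IH]; rewrite allpairs_cons count_cat count_map IH. Qed.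

Lemma sumn_iota (f : nat -> nat) m n : sumn [seq f a | a <- iota m n] = (\sum_(i < n) f (m + i))%N.
Proof.
elim: n m => [|n IH] m; first by rewrite big_ord0.
by rewrite /= IH big_ord_recl /= addn0; congr (_ + _)%N; apply: eq_bigr => i _; rewrite addSnnS.
Qed.

Lemma count_compsS (p : pred (seq nat)) n k : count p (comps n k.+1) =
  (\sum_(J < n) count (fun s => p (J.+1 :: s)) (comps (n - J.+1) k))%N.
Proof. by rewrite /= count_allpairs_cons sumn_iota. Qed.

Lemma Cc_0 r n : Cc r n 0 = (n == 0%N).
Proof. by rewrite /Cc /=; case: (n == 0%N). Qed.

Lemma Cc_S r n k : Cc r n k.+1 = (\sum_(J < n) Gc r J.+1 1 (n - J.+1) k)%N.
Proof. by rewrite /Cc count_compsS. Qed.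

Lemma Gc_0 r a c m : Gc r a c m 0 = ((m == 0%N) && (c < r)%N).
Proof. by rewrite /Gc /=; case: (m == 0%N) => //=; rewrite /good /= andbT addn0. Qed.

Lemma Gc_S r a c m k : Gc r a c m k.+1 =
  (\sum_(J < m) (if J.+1 == a then Gc r a c.+1 (m - J.+1) k
                 else (c < r) * Gc r J.+1 1 (m - J.+1) k))%N.
Proof.
rewrite /Gc count_compsS; apply: eq_bigr => J _.
under eq_count => s do rewrite good_cons.
case: eqP => [->|_]; first by [].
case: (c < r)%N; rewrite ?mul1n ?mul0n ?count_pred0 //.
Qed.

Lemma Posz_sum n (F : 'I_n -> nat) : ((\sum_(i < n) F i)%N)%:Z = \sum_(i < n) (F i)%:Z.
Proof. by rewrite (big_morph Posz PoszD (erefl (Posz 0))). Qed.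

Definition Sv r a m k : int :=
  if (0 < k)%N && (a <= m)%N then (Gc r a 1 (m - a) (k - 1))%:Z else 0.
Definition Ev r a m k : int := (Cc r m k)%:Z - Sv r a m k.
Definition Eg r a m k l : int :=
  if (l * a <= m)%N && (l <= k)%N then Ev r a (m - l * a) (k - l) else 0.

Lemma Eg_step r a m k l : (1 <= a)%N ->
  (if (a <= m)%N then Eg r a (m - a) k l else 0) = Eg r a m k.+1 l.+1.
Proof.
move=> ha; rewrite /Eg mulSn subSS ltnS.
case: (boolP (a <= m)%N) => h.
  rewrite -subnDA; have -> : (l * a <= m - a)%N = (a + l * a <= m)%N by apply/idP/idP; lia.
  by [].
have -> : (a + l * a <= m)%N = false by apply/negbTE; lia.
by [].
Qed.

Lemma G_formula r a k : (1 <= a)%N -> forall m c,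
  (Gc r a c m k)%:Z = \sum_(l < r - c) Eg r a m k l.
Proof.
move=> ha; elim: k => [|k IH] m c.
  rewrite Gc_0; case: (ltnP c r) => hc.
    have -> : (r - c = (r - c.+1).+1)%N by lia.
    rewrite big_ord_recl big1 ?addr0; last by move=> l _; rewrite /Eg andbF.
    by rewrite /Eg /= mul0n subn0 subn0 /Ev /Sv /= Cc_0 andbT subr0.
  have -> : (r - c = 0)%N by lia.
  by rewrite big_ord0 andbF.
rewrite Gc_S Posz_sum.
pose Yz (J : nat) : int := ((c < r) * Gc r J.+1 1 (m - J.+1) k)%N%:Z.
transitivity (\sum_(J < m) (if (J : nat) == a.-1 then (Gc r a c.+1 (m - a) k)%:Z - Yz J else 0)
              + \sum_(J < m) Yz J).
  rewrite -big_split /=; apply: eq_bigr => J _.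
  have -> : (J.+1 == a) = ((J : nat) == a.-1) by apply/eqP/eqP; lia.
  case: eqP => [->|_]; last by rewrite add0r.
  by rewrite subrK prednK.
rewrite (sum_pulse _ _ (fun J => (Gc r a c.+1 (m - a) k)%:Z - Yz J)).
have hY : \sum_(J < m) Yz J = ((c < r)%N%:Z) * (Cc r m k.+1)%:Z.
  rewrite Cc_S Posz_sum mulr_sumr; apply: eq_bigr => J _; by rewrite /Yz PoszM.
rewrite hY /Yz prednK //.
case: (ltnP c r) => hc.
  have -> : (r - c = (r - c.+1).+1)%N by lia.
  have hsum : \sum_(l < r - c.+1) Eg r a m k.+1 (l.+1) =
     if (a <= m)%N then (Gc r a c.+1 (m - a) k)%:Z else 0.
    rewrite -(eq_bigr _ (fun (l : 'I_(r - c.+1)) _ => Eg_step r m k l ha)).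
    by case: (a <= m)%N; [rewrite IH | rewrite big1].
  rewrite big_ord_recl /= hsum /Eg mul0n !subn0 /= /Ev /Sv /= subn1 /=.
  case: (a <= m)%N => /=; rewrite ?mul1n ?mul1r; ring.
have -> : (r - c = 0)%N by lia.
have h0 : (r - c.+1 = 0)%N by lia.
rewrite big_ord0 IH h0 big_ord0 mul0r addr0 mul0n.
by case: (a <= m)%N; rewrite ?subr0.
Qed.

Lemma S_formula r a m k : (1 <= a)%N ->
  Sv r a m k = \sum_(l < r - 1) Eg r a m k l.+1.
Proof.
move=> ha; rewrite /Sv; case: (boolP ((0 < k)%N && (a <= m)%N)) => [/andP[k0 am]|h].
  rewrite (G_formula r (k - 1) ha (m - a) 1); apply: eq_bigr => l _.
  by rewrite -[in RHS](prednK k0) -subn1 -Eg_step // am.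
rewrite big1 // => l _; rewrite /Eg; case: ifP => // /andP[h1 h2].
move: h h1 h2; nia.
Qed.

Lemma ray (r N : nat) (c s : nat -> int) : (1 <= r)%N ->
  (forall l, (N <= l)%N -> c l = 0) -> (forall l, (N <= l)%N -> s l = 0) ->
  (forall l, s l = \sum_(j < r - 1) (c (l + j.+1)%N - s (l + j.+1)%N)) ->
  s 0%N = \sum_(t < N) (c (r * t).+1 - c (r * t + r)%N).
Proof.
move=> hr hc hs hrec.
have step1 : forall l, s l = c l.+1 - c (l + r)%N + s (l + r)%N.
  move=> l; case: r hr hrec => [//|[|R]] _ hrec.
    have h0 : forall x, s x = 0 by move=> x; rewrite hrec big_ord0.
    by rewrite !h0 addn1 subrr addr0.
  have hsl := hrec l; have hsl1 := hrec l.+1.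
  rewrite subn1 /= big_ord_recl /= in hsl; rewrite subn1 /= big_ord_recr /= in hsl1.
  set S1 := \sum_(i < R) _ in hsl; set S2 := \sum_(i < R) _ in hsl1.
  have eS : S1 = S2 by apply: eq_bigr => j _; rewrite /bump /= add1n addSnnS.
  have e1 : (l + R.+2 = l.+1 + R.+1)%N by lia.
  rewrite hsl eS e1 addn1; move: hsl1 => ->; ring.
have step2 : forall d l, (N <= l + r * d)%N ->
    s l = \sum_(t < d) (c (l + r * t).+1 - c (l + r * t + r)%N).
  elim=> [|d IH] l hl; first by rewrite big_ord0 hs // -(addn0 l) -(muln0 r).
  rewrite step1 big_ord_recl /= muln0 addn0 (IH (l + r)%N); last by move: hl; rewrite mulnS; lia.
  congr (_ + _); apply: eq_bigr => t _.
  by rewrite /bump /= add1n mulnS !addnA.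
by rewrite (step2 N 0%N) //; rewrite add0n; apply: leq_pmull.
Qed.

Definition Csh r n k i j : int :=
  if (i <= n)%N && (j <= k)%N then (Cc r (n - i) (k - j))%:Z else 0.

Lemma Sv_ray r a n k : (1 <= r)%N -> (1 <= a)%N ->
  Sv r a n k = \sum_(t < k.+1) (Csh r n k ((r * t).+1 * a) (r * t).+1
                                - Csh r n k ((r * t + r) * a) (r * t + r)).
Proof.
move=> hr ha.
pose s l := if (l * a <= n)%N && (l <= k)%N then Sv r a (n - l * a) (k - l) else 0.
have := @ray r k.+1 (fun l => Csh r n k (l * a) l) s hr.
have hs0 : s 0%N = Sv r a n k by rewrite /s mul0n !subn0.
rewrite -hs0; apply.
- by move=> l hl; rewrite /Csh; case: ifP => // /andP[_ h]; move: hl h; lia.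
- by move=> l hl; rewrite /s; case: ifP => // /andP[_ h]; move: hl h; lia.
move=> l; rewrite {1}/s; case: (boolP ((l * a <= n)%N && (l <= k)%N)) => [/andP[g1 g2]|g].
  rewrite S_formula //; apply: eq_bigr => j _.
  rewrite /Eg /Csh /s /Ev.
  have -> : ((l + j.+1) * a <= n)%N = (j.+1 * a <= n - l * a)%N by rewrite mulnDl; apply/idP/idP; lia.
  have -> : (l + j.+1 <= k)%N = (j.+1 <= k - l)%N by apply/idP/idP; lia.
  case: ifP => // _; by rewrite mulnDl !subnDA.
rewrite big1 // => j _; rewrite /Csh /s.
have -> : ((l + j.+1) * a <= n)%N && (l + j.+1 <= k)%N = false.
  apply/negbTE; move: g; rewrite mulnDl; nia.
by rewrite subrr.
Qed.

Lemma Cc_main r n k :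
  (Cc r n k)%:Z = ind ((n == 0%N) && (k == 0%N)) + \sum_(J < n) Sv r J.+1 n k.
Proof.
case: k => [|k].
  rewrite Cc_0 big1 ?addr0 ?andbT; [by case: (n == 0%N) | by move=> J _; rewrite /Sv].
rewrite Cc_S Posz_sum andbF add0r; apply: eq_bigr => J _.
by rewrite /Sv /= ltn_ord subn1.
Qed.

Lemma Csh_0 r n k i j : (n < i)%N || (k < j)%N -> Csh r n k i j = 0.
Proof. by rewrite /Csh => h; case: ifP => // /andP[h1 h2]; move: h h1 h2; lia. Qed.

Lemma pulse0 r n k p q :
  \sum_(i < n.+1) \sum_(j < k.+1) ind (((i : nat) == p) && ((j : nat) == q)) * (Cc r (n - i) (k - j))%:Z
  = Csh r n k p q.
Proof.
have := mul_monoL p q (fun n k => (Cc r n k)%:Z) n k.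
by rewrite /fps_mul /mono /ind /Csh => ->.
Qed.

Lemma pulse2 r n k A B (P Q : nat -> nat -> nat) :
  \sum_(i < n.+1) \sum_(j < k.+1)
     (\sum_(x < A) \sum_(y < B) ind (((i : nat) == P x y) && ((j : nat) == Q x y))) * (Cc r (n - i) (k - j))%:Z
  = \sum_(x < A) \sum_(y < B) Csh r n k (P x y) (Q x y).
Proof.
transitivity (\sum_(i < n.+1) \sum_(j < k.+1) \sum_(x < A) \sum_(y < B)
   ind (((i : nat) == P x y) && ((j : nat) == Q x y)) * (Cc r (n - i) (k - j))%:Z).
  apply: eq_bigr => i _; apply: eq_bigr => j _; rewrite mulr_suml; apply: eq_bigr => x _.
  by rewrite mulr_suml.
under eq_bigr => i _ do rewrite exchange_big.
rewrite exchange_big; apply: eq_bigr => x _.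
under eq_bigr => i _ do rewrite exchange_big.
rewrite exchange_big; apply: eq_bigr => y _.
exact: pulse0.
Qed.

Definition bser (r : nat) : fps := fps_sub (fps_const 1) (denom_series r).

Lemma b_val r i j : bser r i j = Xs i j - Ys r i j.
Proof.
have -> : bser r i j = fps_const 1 i j - (fps_const 1 i j - Xs i j + Ys r i j) by [].
ring.
Qed.

Lemma main_eq r n k : (1 <= r)%N ->
  (Cc r n k)%:Z = ind ((n == 0%N) && (k == 0%N)) +
   \sum_(i < n.+1) \sum_(j < k.+1) (Xs i j - Ys r i j) * (Cc r (n - i) (k - j))%:Z.
Proof.
move=> hr; rewrite Cc_main; congr (_ + _).
set M := (n + k).+1.
have hX : \sum_(i < n.+1) \sum_(j < k.+1) Xs i j * (Cc r (n - i) (k - j))%:Z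
          = \sum_(J < n) Csh r n k J.+1 1.
  transitivity (\sum_(i < n.+1) \sum_(j < k.+1)
     (\sum_(x < n) \sum_(y < 1) ind (((i : nat) == (fun x y => x.+1) x y) && ((j : nat) == (fun x y => 1%N) x y))) * (Cc r (n - i) (k - j))%:Z).
    apply: eq_bigr => i _; apply: eq_bigr => j _; congr (_ * _).
    rewrite Xs_val; under eq_bigr => x _ do rewrite big_ord1 /=.
    case: (posnP i) => [->|hi].
      by rewrite big1 // => x _; rewrite /ind.
    rewrite (eq_bigr (fun x : 'I_n => if (x : nat) == i.-1 then ind ((j : nat) == 1%N) else 0)).
      rewrite (sum_pulse _ _ (fun _ => ind ((j : nat) == 1%N))).
      have -> : (i.-1 < n)%N by have := ltn_ord i; lia.
      by [].
    move=> x _; rewrite /ind; dec => //; lia.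
  by rewrite (pulse2 r n k n 1 (fun x y => x.+1) (fun x y => 1%N)); apply: eq_bigr => J _; rewrite big_ord1.
have hY : \sum_(i < n.+1) \sum_(j < k.+1) Ys r i j * (Cc r (n - i) (k - j))%:Z
          = \sum_(J < M) \sum_(m < M) Csh r n k (r * J.+1 * m.+1) (r * m.+1)
          - \sum_(J < M) \sum_(m < M) Csh r n k (r * J.+1 * m.+1 + J.+1) (r * m.+1).+1.
  transitivity (\sum_(i < n.+1) \sum_(j < k.+1)
     ((\sum_(x < M) \sum_(y < M) ind (((i : nat) == (fun x y => r * x.+1 * y.+1)%N x y) && ((j : nat) == (fun x y => r * y.+1)%N x y))) * (Cc r (n - i) (k - j))%:Z
    - (\sum_(x < M) \sum_(y < M) ind (((i : nat) == (fun x y => r * x.+1 * y.+1 + x.+1)%N x y) && ((j : nat) == (fun x y => (r * y.+1).+1)%N x y))) * (Cc r (n - i) (k - j))%:Z)).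
    apply: eq_bigr => i _; apply: eq_bigr => j _; rewrite -mulrBl; congr (_ * _).
    rewrite (@Ys_val r i j M hr); last by have := ltn_ord i; have := ltn_ord j; lia.
    rewrite -sumrB; apply: eq_bigr => x _; rewrite -sumrB; apply: eq_bigr => y _.
    by rewrite /Yt.
  by rewrite (eq_bigr _ (fun i _ => sumrB _ _ _ _)) sumrB (pulse2 r n k M M (fun x y => r * x.+1 * y.+1)%N (fun x y => r * y.+1)%N) (pulse2 r n k M M (fun x y => r * x.+1 * y.+1 + x.+1)%N (fun x y => (r * y.+1).+1)%N).
rewrite (eq_bigr _ (fun i _ => eq_bigr _ (fun j _ => mulrBl _ _ _))).
rewrite (eq_bigr _ (fun i _ => sumrB _ _ _ _)) sumrB hX hY.
rewrite (eq_bigr _ (fun (J : 'I_n) _ => @Sv_ray r J.+1 n k hr (ltn0Sn J))).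
rewrite (eq_bigr _ (fun J _ => sumrB _ _ _ _)) sumrB.
rewrite (eq_bigr _ (fun J _ => big_ord_recl _ _)) big_split /=.
have hα : \sum_(J < n) \sum_(t < k) Csh r n k ((r * (bump 0 t)).+1 * J.+1) (r * (bump 0 t)).+1
        = \sum_(J < M) \sum_(m < M) Csh r n k (r * J.+1 * m.+1 + J.+1) (r * m.+1).+1.
  transitivity (\sum_(J < n) \sum_(m < M) Csh r n k (r * J.+1 * m.+1 + J.+1) (r * m.+1).+1).
    apply: eq_bigr => J _.
    transitivity (\sum_(t < k) Csh r n k (r * J.+1 * t.+1 + J.+1) (r * t.+1).+1).
      apply: eq_bigr => t _; rewrite /bump add1n; congr Csh; nia.
    apply: (@sum_trunc k M (fun m => Csh r n k (r * J.+1 * m.+1 + J.+1) (r * m.+1).+1)) => m h1 h2.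
      by rewrite /M in h1; lia.
    by apply: Csh_0; apply/orP; right; nia.
  apply: (@sum_trunc n M (fun J => \sum_(m < M) Csh r n k (r * J.+1 * m.+1 + J.+1) (r * m.+1).+1)) => J h1 h2.
    by rewrite /M in h1; lia.
  by apply: big1 => m _; apply: Csh_0; apply/orP; left; lia.
have hβ : \sum_(J < n) \sum_(t < k.+1) Csh r n k ((r * t + r) * J.+1) (r * t + r)
        = \sum_(J < M) \sum_(m < M) Csh r n k (r * J.+1 * m.+1) (r * m.+1).
  transitivity (\sum_(J < n) \sum_(m < M) Csh r n k (r * J.+1 * m.+1) (r * m.+1)).
    apply: eq_bigr => J _.
    transitivity (\sum_(t < k.+1) Csh r n k (r * J.+1 * t.+1) (r * t.+1)).
      apply: eq_bigr => t _; congr Csh; nia.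
    apply: (@sum_trunc k.+1 M (fun m => Csh r n k (r * J.+1 * m.+1) (r * m.+1))) => m h1 h2.
      by rewrite /M in h1; lia.
    by apply: Csh_0; apply/orP; right; nia.
  apply: (@sum_trunc n M (fun J => \sum_(m < M) Csh r n k (r * J.+1 * m.+1) (r * m.+1))) => J h1 h2.
    by rewrite /M in h1; lia.
  by apply: big1 => m _; apply: Csh_0; apply/orP; left; nia.
rewrite hα hβ.
have -> : \sum_(J < n) Csh r n k ((r * 0).+1 * J.+1) (r * 0).+1 = \sum_(J < n) Csh r n k J.+1 1.
  by apply: eq_bigr => J _; rewrite muln0 mul1n.
ring.
Qed.

Lemma b00 r : (1 <= r)%N -> bser r 0%N 0%N = 0.
Proof.
move=> hr; rewrite b_val Xs_val /= (@Ys_val r 0 0 1 hr) // !big_ord1 /Yt /ind.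
dec => //; nia.
Qed.

Theorem theorem3 (r : nat) (hr : (1 <= r)%N) :
  forall n k : nat, lhs_series r n k = rhs_series r n k.
Proof.
apply: (@uniq_sol (bser r)); first exact: b00.
  move=> n k; rewrite /lhs_series bridge -/(Cc r n k) (main_eq n k hr); congr (_ + _).
  apply: eq_bigr => i _; apply: eq_bigr => j _.
  by rewrite b_val bridge.
move=> n k; exact: (geom_eq (b00 hr)).
Qed.
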